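(* Let $(X,T)$ be random variables with $X$ taking values in a countable set $\mathcal{X}$ and $T\in\{0,1\}$, with joint distribution $P$. Let $Q(T=1\mid X)$ be a propensity score model, i.e. a function $x\mapsto Q(T=1\mid X=x)\in(0,1)$. Suppose $Q$ is not calibrated, in the sense that there exists $q'\in(0,1)$ with $P\big(Q(T=1\mid X)=q'\big)>0$ and $P\big(T=1 \mid Q(T=1\mid X)=q'\big)\neq q'$. Then there exists an outcome function $g:\mathcal{X}\times\{0,1\}\to\mathbb{R}$ such that, if the outcome is $Y=g(X,T)$ (so that the potential outcomes are $Y(t)=g(X,t)$ and the true average treatment effect is $\tau=\mathbb{E}[g(X,1)-g(X,0)]$), the IPTW estimator computed from $n$ i.i.d. samples $(X^{(i)},T^{(i)},Y^{(i)})$, $$\hat\tau_n=\frac1n\sum_{i=1}^n\left(\frac{T^{(i)}Y^{(i)}}{Q(T=1\mid X^{(i)})}-\frac{(1-T^{(i)})Y^{(i)}}{1-Q(T=1\mid X^{(i)})}\right),$$ satisfies $\lim_{n\to\infty}\Pr(\hat\tau_n=\tau)=0$.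
   Context: Setting: observational data of i.i.d. units with features $X$, binary treatment $T$ and scalar outcome $Y$. A propensity score model $Q(T=1\mid X)$ is calibrated if $P(T=1\mid Q(T=1\mid X)=q)=q$ for all $q$; the IPTW (inverse probability of treatment weighting) estimator is as displayed in the claim. *)

(* Defs.v *)
From HB Require Import structures.
From mathcomp Require Import all_boot all_order all_algebra.
From mathcomp Require Import all_classical all_reals all_analysis.
Set Implicit Arguments. Unset Strict Implicit. Unset Printing Implicit Defensive.
Import Order.TTheory GRing.Theory Num.Theory.
Local Open Scope classical_set_scope.
Local Open Scope ring_scope.

Section Defs.
Variables (R : realType) (X : countType).

(* joint pmf of (X,T): p x t = P(X = x, T = t) *)
Definition is_pmf (p : X -> bool -> R) : Prop :=
  (forall x t, 0 <= p x t) /\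
  (\esum_(z in [set: X * bool]) (p z.1 z.2)%:E = 1)%E.

Definition probXT (p : X -> bool -> R) (A : set (X * bool)) : \bar R :=
  \esum_(z in A) (p z.1 z.2)%:E.

Definition condprob (p : X -> bool -> R) (A B : set (X * bool)) : R :=
  fine (probXT p (A `&` B)) / fine (probXT p B).

Definition not_calibrated (p : X -> bool -> R) (Q : X -> R) : Prop :=
  exists q', 0 < q' < 1 /\
    (0 < probXT p [set z | Q z.1 = q'])%E /\
    condprob p [set z | z.2 = true] [set z | Q z.1 = q'] != q'.

Definition has_expect (p : X -> bool -> R) (f : X * bool -> R) : Prop :=
  summable [set: X * bool] (fun z => (p z.1 z.2 * f z)%:E).

Definition expect (p : X -> bool -> R) (f : X * bool -> R) : R :=
  fine (\esum_(z in [set: X * bool]) (fun z => (p z.1 z.2 * f z)%:E)^\+ z)%E -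
  fine (\esum_(z in [set: X * bool]) (fun z => (p z.1 z.2 * f z)%:E)^\- z)%E.

Definition iptw (Q : X -> R) (g : X -> bool -> R) (n : nat)
    (s : n.-tuple (X * bool)) : R :=
  n%:R^-1 * \sum_(i < n)
    (let x := (tnth s i).1 in let t := (tnth s i).2 in
     let y := g x t in
     (t%:R * y) / Q x - ((1 - t%:R) * y) / (1 - Q x)).

Definition prob_iid (p : X -> bool -> R) (n : nat)
    (A : set (n.-tuple (X * bool))) : \bar R :=
  \esum_(s in A) (\prod_(i < n) p (tnth s i).1 (tnth s i).2)%:E.

End Defs.

(* Main.v *)
Require Import Defs.
From mathcomp Require Import all_boot all_order all_algebra.
From mathcomp Require Import all_classical all_reals all_analysis.
From mathcomp Require Import ring lra.
Import Order.TTheory GRing.Theory Num.Theory.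
Local Open Scope classical_set_scope.
Local Open Scope ring_scope.

Lemma esumZl_le (R : realType) (T : choiceType) (S : set T) (a : T -> \bar R) (c : R) :
  0 <= c -> (forall i, (0 <= a i)%E) ->
  (\esum_(i in S) (c%:E * a i) <= c%:E * \esum_(i in S) a i)%E.
Proof.
move=> c0 a0; apply: ge_ereal_sup => _ [F [finF FS] <-].
rewrite fsbig_finite// -ge0_sume_distrr // -fsbig_finite//.
apply: lee_pmul => //; first exact: fsume_ge0.
by apply: ereal_sup_ubound; exists F.
Qed.

Lemma esum_tuple_prod (R : realType) (T : choiceType) (h : T -> R) (M : R) :
 (forall z, 0 <= h z) -> (\esum_(z in [set: T]) (h z)%:E <= M%:E)%E ->
 forall n, (\esum_(s in [set: n.-tuple T]) (\prod_(i < n) h (tnth s i))%:E <= (M ^+ n)%:E)%E.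
Proof.
move=> h0 hM.
have M0 : 0 <= M.
  by rewrite -lee_fin; apply: le_trans hM; apply: esum_ge0 => z _; rewrite lee_fin.
elim=> [|n IH].
  rewrite (_ : [set: 0.-tuple T] = [set [tuple]]); last first.
    by apply/seteqP; split => s //= _; rewrite tuple0.
  by rewrite esum_set1 ?big_ord0 ?expr0 // lee_fin.
rewrite (reindex_esum [set: T * n.-tuple T] [set: n.+1.-tuple T] (fun zt => [tuple of zt.1 :: zt.2])); last first.
  split.
  - by move=> ? ?.
  - move=> [z t] [z' t'] _ _ /= /(congr1 val) /= [-> /val_inj ->] //.
  - move=> s _ /=; exists (thead s, behead_tuple s) => //=.
    by rewrite [RHS]tuple_eta.
under eq_esum => zt _ do rewrite big_ord_recl tnth0 EFinM.
under eq_esum => zt _ do under eq_bigr => i _ do rewrite tnthS.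
rewrite (_ : [set: T * n.-tuple T] = [set: T] `*`` (fun _ => [set: n.-tuple T])); last first.
  by apply/seteqP; split => -[z t].
rewrite -(@esum_esum _ _ _ _ _ (fun z t => (h z)%:E * (\prod_(i < n) h (tnth t i))%:E)%E); last first.
  by move=> z t _ _; rewrite -EFinM lee_fin mulr_ge0 // prodr_ge0.
apply: (@le_trans _ _ (\esum_(z in [set: T]) ((M ^+ n)%:E * (h z)%:E))%E).
  apply: le_esum => z _.
  have := @esumZl_le _ _ [set: n.-tuple T] (fun t => (\prod_(i<n) h (tnth t i))%:E) (h z) (h0 z).
  move=> /(_ (fun t => ltac:(by rewrite lee_fin prodr_ge0))) H.
  apply: le_trans H _.
  by rewrite muleC lee_pmul // ?lee_fin ?exprn_ge0 //; apply: esum_ge0 => t _; rewrite lee_fin prodr_ge0.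
apply: (le_trans (@esumZl_le _ _ [set: T] (fun z => (h z)%:E) (M ^+ n) (exprn_ge0 n M0) _)).
  by move=> z; rewrite lee_fin.
by rewrite exprSr EFinM lee_pmul // ?lee_fin ?exprn_ge0 //; apply: esum_ge0 => t _; rewrite lee_fin.
Qed.
Lemma theta_exists (R : realType) (r s : R) : 0 <= r -> r <= 1 -> 0 < s -> r != s ->
  exists th : R, (r * expR th + (1 - r)) * expR (- (th * s)) < 1.
Proof.
move=> r0 r1 s0 rs.
have key : forall th, r * expR th + (1 - r) < expR (th * s) ->
    (r * expR th + (1 - r)) * expR (- (th * s)) < 1.
  move=> th H; rewrite expRN ltr_pdivrMr ?expR_gt0 // mul1r //.
case: (ltgtP r s) rs => // rs _.
- pose th := (s - r) / (2 * s).
  have th0 : 0 < th by rewrite divr_gt0 // ?subr_gt0 // mulr_gt0.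
  have th2 : th * (2 * s) = s - r by rewrite /th mulfVK // mulf_neq0 // gt_eqF.
  exists th; apply: key.
  have e2 := expR_ge1Dx (th * s).
  have e1 := expR_ge1Dx (- th).
  rewrite expRN in e1.
  have E0 := expR_gt0 th.
  have e1' : expR th * (1 - th) <= 1.
    by have := ler_wpM2l (ltW E0) e1; rewrite mulfV ?gt_eqF.
  apply: lt_le_trans e2.
  have ths : th * s = (s - r) / 2 by rewrite -th2; field.
  have th1 : 0 < 1 - th by nra.
  have H1 : r * (expR th - 1) * (1 - th) <= r * th by nra.
  have H2 : r * th < th * s * (1 - th) by nra.
  have H3 : (r * (expR th - 1) - th * s) * (1 - th) < 0 by nra.
  have H4 : r * (expR th - 1) - th * s < 0.
    by move: H3; rewrite pmulr_llt0.
  lra.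
- pose eta := (r - s) / (2 * s).
  have eta0 : 0 < eta by rewrite divr_gt0 // ?subr_gt0 // mulr_gt0.
  have eta2 : eta * (2 * s) = r - s by rewrite /eta mulfVK // mulf_neq0 // gt_eqF.
  exists (- eta); apply: key.
  have e2 := expR_ge1Dx (- eta * s).
  have e1 := expR_ge1Dx eta.
  have E0 := expR_gt0 eta.
  rewrite expRN.
  have Ei0 : 0 < (expR eta)^-1 by rewrite invr_gt0.
  have e1' : (expR eta)^-1 * (1 + eta) <= 1.
    by have := ler_wpM2l (ltW Ei0) e1; rewrite mulVf ?gt_eqF.
  apply: lt_le_trans e2.
  nra.
Qed.

Theorem mainTheorem1 (R : realType) (X : countType)
    (p : X -> bool -> R) (Q : X -> R) :
  is_pmf p ->
  (forall x, 0 < Q x < 1) ->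
  not_calibrated p Q ->
  exists g : X -> bool -> R,
    has_expect p (fun z => g z.1 true - g z.1 false) /\
    let tau := expect p (fun z => g z.1 true - g z.1 false) in
    (fun n => prob_iid p [set s : n.-tuple (X * bool) | iptw Q g s = tau])
      @ \oo --> (0 : \bar R).
Proof.
move=> [p0 p1] Q01 [q' [/andP[q'0 q'1] [PS ncal]]].
set S := [set z : X * bool | Q z.1 = q'] in PS ncal.
set B := [set z : X * bool | z.2 = true] `&` S in ncal.
have pe0 : forall z : X * bool, (0 <= (p z.1 z.2)%:E)%E by move=> z; rewrite lee_fin.
have le1 : forall C, (probXT p C <= 1)%E.
  move=> C; rewrite /probXT esum_mkcond -p1; apply: le_esum => z _.
  by case: ifP.
have ge0 : forall C, (0 <= probXT p C)%E by move=> C; apply: esum_ge0.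
have finP : forall C, probXT p C \is a fin_num.
  by move=> C; rewrite ge0_fin_numE ?(le_lt_trans (le1 C)) ?ltry.
set pi := fine (probXT p S).
set r := fine (probXT p B).
have piE : probXT p S = pi%:E by rewrite fineK.
have rE : probXT p B = r%:E by rewrite fineK.
have pi0 : 0 < pi by rewrite -lte_fin -piE.
have r0 : 0 <= r by rewrite -lee_fin -rE.
have r1 : r <= 1 by rewrite -lee_fin -rE.
have rne : r != pi * q'.
  apply: contra ncal => /eqP H; rewrite /condprob.
  rewrite -/B -/pi -/r H mulrAC divff ?mul1r; last by rewrite gt_eqF.
  by apply/eqP.
pose g := fun (x : X) (t : bool) => if t && (Q x == q') then 1 else 0 : R.
have gE : forall z : X * bool, g z.1 true - g z.1 false = if Q z.1 == q' then 1 else 0.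
  by move=> z; rewrite /g /= subr0.
have fge0 : forall z : X * bool, (0 <= (p z.1 z.2 * (g z.1 true - g z.1 false))%:E)%E.
  by move=> z; rewrite gE lee_fin; case: ifP => _; rewrite ?mulr1 ?mulr0.
have esumf : (\esum_(z in [set: X * bool]) (p z.1 z.2 * (g z.1 true - g z.1 false))%:E = pi%:E)%E.
  rewrite -piE /probXT [in RHS]esum_mkcond; apply: eq_esum => z _.
  have -> : (z \in S) = (Q z.1 == q') by apply/idP/eqP => [/set_mem|/mem_set].
  rewrite gE; case: eqP => _; by rewrite ?mulr1 ?mulr0.
exists g; split.
  rewrite /has_expect /summable (_ : (fun x => _) = (fun z : X * bool => (p z.1 z.2 * (g z.1 true - g z.1 false))%:E)); last first.
    by apply: funext => z; rewrite gee0_abs.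
  by rewrite esumf ltry.
have tauE : expect p (fun z => g z.1 true - g z.1 false) = pi.
  rewrite /expect.
  rewrite (eq_esum (b := fun z : X * bool => (p z.1 z.2 * (g z.1 true - g z.1 false))%:E)); last first.
    by move=> z _; rewrite (@ge0_funeposE _ _ setT) // inE.
  rewrite [X in _ - fine X](eq_esum (b := fun z : X * bool => 0%E)); last first.
    by move=> z _; rewrite (@ge0_funenegE _ _ setT) // inE.
  by rewrite esumf esum1 // subr0.
rewrite /= tauE.
pose ind := fun z : X * bool => if z.2 && (Q z.1 == q') then 1 else 0 : R.
have termE : forall z : X * bool,
   (let x := z.1 in let t := z.2 in let y := g x t in
     (t%:R * y) / Q x - ((1 - t%:R) * y) / (1 - Q x)) = ind z / q'.
  move=> [x t] /=; rewrite /g /ind /=.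
  case: t => /=; case: (Q x =P q') => [->|_] /=;
   by rewrite ?(mul1r, mulr1, subrr, mul0r, mulr0, subr0, sub0r, oppr0).
have evt : forall n (s : n.-tuple (X * bool)), iptw Q g s = pi ->
    \sum_(i < n) ind (tnth s i) = n%:R * (pi * q').
  move=> n s; rewrite /iptw.
  rewrite (eq_bigr (fun i => ind (tnth s i) / q')); last by move=> i _; exact: termE.
  rewrite -mulr_suml; case: n s => [|n] s.
    by rewrite big_ord0 mul0r mulr0 => /esym /eqP; rewrite gt_eqF.
  move=> H; rewrite -H; field.
  by rewrite gt_eqF //= -natr1 addrC natr1 pnatr_eq0.
set s0 := pi * q' in evt rne.
have [th Hth] := @theta_exists R r s0 r0 r1 (mulr_gt0 pi0 q'0) rne.
set M := r * expR th + (1 - r) in Hth.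
set c := M * expR (- (th * s0)) in Hth.
have M0 : 0 <= M by rewrite addr_ge0 ?mulr_ge0 ?subr_ge0 // ltW // expR_gt0.
have c0 : 0 <= c by rewrite mulr_ge0 // ltW // expR_gt0.
pose h := fun z : X * bool => p z.1 z.2 * expR (th * ind z).
have h0 : forall z, 0 <= h z by move=> z; rewrite mulr_ge0 // ltW // expR_gt0.
have hM : (\esum_(z in [set: X * bool]) (h z)%:E <= M%:E)%E.
  rewrite (esumID B); last by move=> z _; rewrite lee_fin.
  rewrite !setTI.
  have hB : (\esum_(z in B) (h z)%:E <= (expR th * r)%:E)%E.
    rewrite (eq_esum (b := fun z => ((expR th)%:E * (p z.1 z.2)%:E)%E)); last first.
      move=> [x t] [/= tt /= Qx]; by rewrite /h /ind /= tt Qx eqxx /= mulr1 -EFinM mulrC.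
    apply: le_trans (@esumZl_le _ _ B (fun z => (p z.1 z.2)%:E) (expR th) (ltW (expR_gt0 _)) pe0) _.
    by rewrite -/(probXT p B) rE -EFinM.
  have hnB : \esum_(z in ~` B) (h z)%:E = (1 - r)%:E.
    rewrite (eq_esum (b := fun z => (p z.1 z.2)%:E)); last first.
      move=> [x t] nB; rewrite /h /ind /=.
      have -> : t && (Q x == q') = false.
        by apply/negP => /andP[/= tt /eqP e]; apply: nB; split.
      by rewrite mulr0 expR0 mulr1.
    have := p1; rewrite (esumID B) ?setTI; last by move=> z _; rewrite lee_fin.
    rewrite -/(probXT p B) -/(probXT p (~` B)) rE -(fineK (finP (~` B))) -EFinD.
    move=> /(congr1 fine) /= H.
    by congr (_%:E); lra.
  rewrite hnB; apply: le_trans (leeD hB (le_refl _)) _.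
  by rewrite -EFinD lee_fin /M mulrC.
have bnd : forall n, (prob_iid p [set s : n.-tuple (X * bool) | iptw Q g s = pi] <= (c ^+ n)%:E)%E.
  move=> n; rewrite /prob_iid.
  set K := expR (- (th * s0)) ^+ n.
  have K0 : 0 <= K by rewrite exprn_ge0 // ltW // expR_gt0.
  apply: (@le_trans _ _ (\esum_(s in [set: n.-tuple (X * bool)]) (K%:E * (\prod_(i < n) h (tnth s i))%:E))%E).
    rewrite esum_mkcond; apply: le_esum => s _; case: ifPn => [/set_mem /= Hs | _]; last first.
      by rewrite -EFinM lee_fin mulr_ge0 ?prodr_ge0.
    rewrite -EFinM lee_fin le_eqVlt; apply/orP; left; apply/eqP.
    have Hsum := evt n s Hs.
    rewrite /h big_split /= -expR_sum -mulr_sumr Hsum /K -expRM_natl mulrCA -expRD.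
    have -> : n%:R * - (th * s0) + th * (n%:R * s0) = 0 by ring.
    by rewrite expR0 mulr1.
  apply: le_trans (@esumZl_le _ _ setT (fun s : n.-tuple (X * bool) => (\prod_(i < n) h (tnth s i))%:E) K K0 _) _.
    by move=> s; rewrite lee_fin prodr_ge0.
  rewrite /c exprMn mulrC EFinM; apply: lee_pmul => //.
  - by apply: esum_ge0 => s _; rewrite lee_fin prodr_ge0.
  - by apply: esum_tuple_prod.
apply: (@squeeze_cvge _ _ _ R (fun=> 0%E) _ (fun n => (c ^+ n)%:E)).
- near=> n; apply/andP; split; [apply: esum_ge0 => s _; rewrite lee_fin; apply: prodr_ge0 => i _; exact: p0 | exact: bnd].
- exact: cvg_cst.
- apply: cvg_EFin; first by near=> n.
  by apply: cvg_expr; rewrite ger0_norm.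
Unshelve. all: by end_near.
Qed.
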